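(* Let $d\in\mathbb{N}$ and let $\mathcal{P}$ be a partition of $\mathbb{R}^{d}$. Suppose there exists $D\in(0,\infty)$ such that $\operatorname{diam}(X)\leq D$ for all $X\in\mathcal{P}$, and let $\epsilon\in(0,\infty)$ be such that $|\mathcal{N}_{\epsilon}(\vec{p})|\leq 2^{d}$ for all $\vec{p}\in\mathbb{R}^{d}$. Then $\epsilon\leq\frac{D}{2}$.
   Context: On $\mathbb{R}^d$ use $d_{max}(\vec{x},\vec{y})=\max_i|x_i-y_i|$; $\operatorname{diam}(X)=\sup\{d_{max}(\vec{x},\vec{y}):\vec{x},\vec{y}\in X\}$; $\overline{B}_{\epsilon}(\vec{p})=\{\vec{x}: d_{max}(\vec{x},\vec{p})\le\epsilon\}$; $\mathcal{N}_{\epsilon}(\vec{p})=\{X\in\mathcal{P}: X\cap\overline{B}_{\epsilon}(\vec{p})\neq\emptyset\}$. *)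

(* Defs.v *)
From HB Require Import structures.
From mathcomp Require Import all_boot all_order all_algebra.
From mathcomp Require Import all_classical all_reals.
From mathcomp Require Import ereal.
Set Implicit Arguments. Unset Strict Implicit. Unset Printing Implicit Defensive.
Import Order.TTheory GRing.Theory Num.Theory.
Local Open Scope classical_set_scope.
Local Open Scope ring_scope.

Section Defs.
Variables (R : realType) (d : nat).
Local Notation T := 'rV[R]_d.

Definition dmax (x y : T) : R := \big[Num.max/0]_(i < d) `|x ord0 i - y ord0 i|.

Definition diam (X : set T) : \bar R :=
  ereal_sup [set r | exists x y, X x /\ X y /\ r = (dmax x y)%:E].

Definition cball (eps : R) (p : T) : set T := [set x | dmax x p <= eps].

Definition Neps (P : set (set T)) (eps : R) (p : T) : set (set T) :=
  [set X | P X /\ X `&` cball eps p !=set0].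

Definition is_partition (P : set (set T)) : Prop :=
  (forall X, P X -> X !=set0) /\
  (forall X Y, P X -> P Y -> X `&` Y !=set0 -> X = Y) /\
  (forall x : T, exists X, P X /\ X x).
End Defs.

(* Main.v *)
Require Import Defs.
From HB Require Import structures.
From mathcomp Require Import all_boot all_order all_algebra.
From mathcomp Require Import all_classical all_reals.
From mathcomp Require Import ereal.
From mathcomp Require Import lra.
Import Order.TTheory GRing.Theory Num.Theory.
Local Open Scope classical_set_scope.
Local Open Scope ring_scope.

Lemma dmax_le {R : realType} {d : nat} (x y : 'rV[R]_d) (r : R) :
  0 <= r -> (forall i, `|x ord0 i - y ord0 i| <= r) -> dmax x y <= r.
Proof.
move=> r0 H; rewrite /dmax; elim/big_ind: _ => //.
by move=> a b ha hb; rewrite ge_max ha hb.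
Qed.

Lemma dmax_ge {R : realType} {d : nat} (x y : 'rV[R]_d) i :
  `|x ord0 i - y ord0 i| <= dmax x y.
Proof. by rewrite /dmax (bigD1 i) //= le_max lexx. Qed.

Lemma diam_dmax {R : realType} {d : nat} {X : set 'rV[R]_d} {D : R} {x y} :
  (diam X <= D%:E)%E -> X x -> X y -> dmax x y <= D.
Proof.
move=> hD Xx Xy; rewrite -lee_fin; apply: le_trans hD.
by apply: ereal_sup_ubound; exists x, y.
Qed.

Theorem mainTheorem8 (R : realType) (d : nat) (P : set (set 'rV[R]_d))
  (D eps : R) :
  (1 <= d)%N ->
  is_partition P ->
  0 < D ->
  (forall X, P X -> (diam X <= D%:E)%E) ->
  0 < eps ->
  (forall p : 'rV[R]_d, (Neps P eps p #<= `I_(2 ^ d))%card) ->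
  eps <= D / 2.
Proof.
move=> d1 [Pne [Pdisj Pcov]] D0 Pdiam eps0 Hcard.
rewrite leNgt; apply/negP => Heps.
have [X0 [PX0 X0x0]] := Pcov 0.
pose S (i : 'I_d) := [set x ord0 i | x in X0].
pose t i := sup (S i).
have hsup i : has_sup (S i).
  split; first by exists ((0 : 'rV[R]_d) ord0 i); exists 0.
  exists ((0 : 'rV[R]_d) ord0 i + D) => _ [x Xx <-].
  have := le_trans (dmax_ge x 0 i) (diam_dmax (Pdiam _ PX0) Xx X0x0).
  rewrite distrC ler_distlC => /andP[_]; lra.
pose m := \row_i (t i - D / 2).
have Xm x i : X0 x -> `|x ord0 i - m ord0 i| <= D / 2.
  move=> Xx; rewrite mxE.
  have h1 : x ord0 i <= t i by apply: sup_upper_bound => //; exists x.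
  have h2 : t i <= x ord0 i + D.
    apply: ge_sup; first by exists (x ord0 i); exists x.
    move=> _ [y Yy <-].
    have := le_trans (dmax_ge y x i) (diam_dmax (Pdiam _ PX0) Yy Xx).
    rewrite ler_distlC => /andP[h3 h4]; lra.
  rewrite ler_distlC; apply/andP; split; lra.
pose c (s : {ffun 'I_d -> bool}) := \row_i (m ord0 i + (if s i then eps else - eps)).
have cm s i : `|c s ord0 i - m ord0 i| = eps.
  rewrite mxE addrAC subrr add0r; case: (s i); rewrite ?normrN gtr0_norm //.
have Yex s : exists Y, P Y /\ Y (c s) by apply: Pcov.
pose Y s := proj1_sig (cid (Yex s)).
have YP s : P (Y s) /\ Y s (c s) by rewrite /Y; case: cid.
pose F (o : option {ffun 'I_d -> bool}) := if o is Some s then Y s else X0.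
have FN o : Neps P eps m (F o).
  case: o => [s|] /=.
    split; first by case: (YP s).
    exists (c s); split; first by case: (YP s).
    by rewrite /cball /=; apply: dmax_le; [lra| move=> i; rewrite cm].
  split => //; exists 0; split => //.
  rewrite /cball /=; apply: dmax_le; first lra.
  by move=> i; apply: le_trans (Xm _ i X0x0) _; lra.
pose i0 : 'I_d := Ordinal d1.
have Finj : injective F.
  have notX s : Y s <> X0.
    move=> e; have := Xm (c s) i0; rewrite cm -e => /(_ (proj2 (YP s))); lra.
  case=> [s|] [s'|] //= e.
  - congr Some; apply/ffunP => i; apply/eqP; apply/negPn/negP => ne.
    have := le_trans (dmax_ge (c s) (c s') i)
      (diam_dmax (Pdiam _ (proj1 (YP s))) (proj2 (YP s)) _).
    rewrite e => /(_ (proj2 (YP s'))).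
    rewrite !mxE; case: (s i) (s' i) ne => -[] //= _ h; move: h; rewrite ler_distlC => /andP[h3 h4]; lra.
  - by case: (notX s).
  - by case: (notX s'); rewrite e.
have /pcard_leP/injfunPex [g gfun ginj] := Hcard m.
have gl o : (g (F o) < 2 ^ d)%N by apply: gfun; apply: FN.
have p0 : (0 < 2 ^ d)%N by rewrite expn_gt0.
pose h o : 'I_(2 ^ d) := insubd (Ordinal p0) (g (F o)).
have hv o : val (h o) = g (F o) by rewrite val_insubd gl.
have hinj : injective h.
  move=> o o' e; apply: Finj; apply: ginj; [by rewrite inE; apply: FN|by rewrite inE; apply: FN|].
  by rewrite -hv -(hv o') e.
have := leq_card h hinj.
rewrite card_option card_ffun card_bool !card_ord ltnn.
done.
Qed.
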